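(* Let $\Delta$ be a simplicial polytopal fan in $\mathbb{R}^d$ with ray generators $\mathbf{v}_1,\ldots,\mathbf{v}_n$ and maximal cones (facets) $F_1,\ldots,F_r$. Then the ray-facet incidence graph $G_\Delta$ has a matching of size $n$.
   Context: A fan is simplicial if every cone is generated by linearly independent vectors; polytopal if it is the normal fan of a polytope (so it is complete and full-dimensional). The ray-facet incidence graph $G_\Delta$ is the bipartite graph on $[n]\sqcup[r]$ in which $i\in[n]$ and $j\in[r]$ are adjacent iff $\mathbf{v}_i$ is a generator of $F_j$. *)

(* Defs.v *)
From HB Require Import structures.
From mathcomp Require Import all_boot all_order all_algebra.
Set Implicit Arguments. Unset Strict Implicit. Unset Printing Implicit Defensive.
Import Order.TTheory GRing.Theory Num.Theory.
Local Open Scope ring_scope.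

Definition dotv (R : realFieldType) (d : nat) (u w : 'rV[R]_d) : R :=
  (u *m w^T) 0 0.

(* A fan Delta in R^d is given by ray generators v : 'I_n -> 'rV_d and
   maximal cones (facets) F_j, each described by the set of indices of its
   ray generators. *)

Definition cone_of (R : realFieldType) (d n : nat) (v : 'I_n -> 'rV[R]_d)
  (S : {set 'I_n}) (x : 'rV[R]_d) : Prop :=
  exists a : 'I_n -> R, (forall i, 0 <= a i) /\ x = \sum_(i in S) a i *: v i.

Definition simplicial_fan (R : realFieldType) (d n r : nat)
  (v : 'I_n -> 'rV[R]_d) (F : 'I_r -> {set 'I_n}) : Prop :=
  forall j (a : 'I_n -> R), \sum_(i in F j) a i *: v i = 0 ->
    forall i, i \in F j -> a i = 0.

(* basic well-formedness of the fan data: the v_i are the distinct rays of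
   the fan (each lies in some maximal cone, no two span the same ray) and
   the F_j are distinct maximal cones *)
Definition fan_data (R : realFieldType) (d n r : nat)
  (v : 'I_n -> 'rV[R]_d) (F : 'I_r -> {set 'I_n}) : Prop :=
  [/\ forall i, exists j, i \in F j,
      forall i i', i != i' -> ~ (exists t : R, 0 < t /\ v i' = t *: v i)
    & forall j j', j != j' -> ~ (forall x, cone_of v (F j) x <-> cone_of v (F j') x)].

(* Polytope P = conv{X_0,...,X_(m-1)}. Normal cone of P at X_k. *)
Definition normal_cone (R : realFieldType) (d m : nat) (X : 'I_m -> 'rV[R]_d)
  (k : 'I_m) (c : 'rV[R]_d) : Prop :=
  forall l, dotv c (X l) <= dotv c (X k).

(* X_k is a vertex of conv(X): some linear functional is uniquely maximized
   at X_k (equivalently, the normal cone at X_k is full-dimensional). *)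
Definition is_vertex (R : realFieldType) (d m : nat) (X : 'I_m -> 'rV[R]_d)
  (k : 'I_m) : Prop :=
  exists c, forall l, X l != X k -> dotv c (X l) < dotv c (X k).

Definition full_dim_polytope (R : realFieldType) (d m : nat)
  (X : 'I_m -> 'rV[R]_d) : Prop :=
  exists k0 : 'I_m, \rank (\matrix_(l < m) (X l - X k0)) = d.

(* Delta is polytopal: it is the normal fan of a full-dimensional polytope,
   i.e. its maximal cones are exactly the normal cones at the vertices. *)
Definition polytopal_fan (R : realFieldType) (d n r : nat)
  (v : 'I_n -> 'rV[R]_d) (F : 'I_r -> {set 'I_n}) : Prop :=
  exists (m : nat) (X : 'I_m -> 'rV[R]_d),
    [/\ full_dim_polytope X,
        forall j, exists k, is_vertex X k /\
          (forall c, cone_of v (F j) c <-> normal_cone X k c)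
      & forall k, is_vertex X k -> exists j,
          (forall c, cone_of v (F j) c <-> normal_cone X k c)].

Definition incidence_edge (n r : nat) (F : 'I_r -> {set 'I_n})
  (e : 'I_n * 'I_r) : bool := e.1 \in F e.2.

Definition is_matching (n r : nat) (F : 'I_r -> {set 'I_n})
  (M : {set 'I_n * 'I_r}) : Prop :=
  (forall e, e \in M -> incidence_edge F e) /\
  (forall e e', e \in M -> e' \in M -> e != e' -> e.1 != e'.1 /\ e.2 != e'.2).

(* Main.v *)
Require Import Defs.
From HB Require Import structures.
From mathcomp Require Import all_boot all_order all_algebra.
From mathcomp Require Import lra.
Set Implicit Arguments. Unset Strict Implicit. Unset Printing Implicit Defensive.
Import Order.TTheory GRing.Theory Num.Theory.
Local Open Scope ring_scope.

Section HallSec.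
Local Open Scope nat_scope.
Variables (I J : finType) (E : I -> J -> bool) (j0 : J).

Definition nbh (B : {set J}) (S : {set I}) := [set j in B | [exists i in S, E i j]].

Lemma nbh_sub B S : nbh B S \subset B.
Proof. by apply/subsetP => j; rewrite inE => /andP[]. Qed.

Lemma hall_gen k : forall (A : {set I}) (B : {set J}), #|A| <= k ->
  (forall S : {set I}, S \subset A -> #|S| <= #|nbh B S|) ->
  exists f : I -> J, {in A &, injective f} /\
    forall i, i \in A -> (f i \in B) && E i (f i).
Proof.
elim: k => [|k IH] A B hA hH.
  have A0 : A = set0 by apply/eqP; rewrite -cards_eq0; move: hA; case: #|A|.
  by exists (fun _ => j0); split; [move=> x y; rewrite A0 inE|move=> i; rewrite A0 inE].
have [->|[a aA]] := set_0Vmem A.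
  by exists (fun _ => j0); split; [move=> x y; rewrite inE|move=> i; rewrite inE].
case: (boolP [exists S : {set I}, [&& S \proper A, S != set0 & #|nbh B S| <= #|S|]]).
- move=> /existsP[S0 /and3P[pS0 nS0 cS0]].
  have sS0 : S0 \subset A by apply: proper_sub.
  have cS0A : #|S0| < #|A| by apply: proper_card.
  have [f1 [inj1 P1]] : exists f : I -> J, {in S0 &, injective f} /\
    forall i, i \in S0 -> (f i \in B) && E i (f i).
    apply: IH; first by rewrite -ltnS; apply: leq_trans hA.
    by move=> S sS; apply: hH; apply: subset_trans sS0.
  set A' := A :\: S0; set B' := B :\: nbh B S0.
  have [f2 [inj2 P2]] : exists f : I -> J, {in A' &, injective f} /\
    forall i, i \in A' -> (f i \in B') && E i (f i).
    apply: IH.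
      rewrite -ltnS; apply: leq_trans hA; rewrite /A'.
      have := cardsID S0 A; rewrite (setIidPr sS0) => <-.
      by rewrite -[X in X < _]add0n ltn_add2r card_gt0.
    move=> T sT.
    have dTS : [disjoint T & S0].
      rewrite -setI_eq0; apply/eqP/setP => x; rewrite !inE.
      by apply/andP => -[xT xS]; move/subsetP: sT => /(_ x xT); rewrite !inE xS.
    have hTS : T :|: S0 \subset A.
      by rewrite subUset sS0 andbT; apply: subset_trans sT _; apply: subsetDl.
    have := hH _ hTS; rewrite cardsU (disjoint_setI0 dTS) cards0 subn0 => h1.
    have h2 : nbh B (T :|: S0) \subset nbh B' T :|: nbh B S0.
      apply/subsetP => j; rewrite !inE => /andP[jB /existsP[i /andP[]]].
      rewrite inE => /orP[iT|iS] Eij.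
        rewrite jB /= orbC; case: [exists i0 in S0, E i0 j] => //=.
        by apply/existsP; exists i; rewrite iT.
      by rewrite jB /=; apply/orP; right; apply/existsP; exists i; rewrite iS.
    have := leq_trans h1 (subset_leq_card h2).
    move=> h3; have := leq_trans h3 (leq_card_setU _ _).
    move=> h4; apply: (@leq_trans (#|nbh B' T| + #|S0| - #|S0|)); last by rewrite addnK.
    by rewrite leq_subRL ?leq_addl // addnC; apply: leq_trans h4 _; rewrite leq_add2l.
  have N1 : forall i, i \in S0 -> f1 i \in nbh B S0.
    move=> i iS; case/andP: (P1 i iS) => fB fE; rewrite inE fB.
    by apply/existsP; exists i; rewrite iS.
  have A'i : forall i, i \in A -> i \notin S0 -> i \in A' by move=> i iA iS; rewrite inE iS iA.
  have N2 : forall i, i \in A -> i \notin S0 -> f2 i \notin nbh B S0.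
    by move=> i iA iS; case/andP: (P2 i (A'i i iA iS)); rewrite inE => /andP[].
  exists (fun i => if i \in S0 then f1 i else f2 i); split.
    move=> x y xA yA /=.
    case: (boolP (x \in S0)) => xS; case: (boolP (y \in S0)) => yS.
    - exact: inj1.
    - by move=> e; have := N2 y yA yS; rewrite -e N1.
    - by move=> e; have := N2 x xA xS; rewrite e N1.
    - by apply: inj2; apply: A'i.
  move=> i iA /=; case: (boolP (i \in S0)) => iS; first exact: P1.
  by case/andP: (P2 i (A'i i iA iS)); rewrite inE => /andP[_ ->] ->.
- move/existsPn => hn.
  have : 0 < #|nbh B [set a]| by have := hH [set a]; rewrite sub1set aA cards1; apply.
  rewrite card_gt0 => /set0Pn[b]; rewrite inE => /andP[bB /existsP[a' /andP[]]].
  rewrite inE => /eqP -> Eab.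
  set A' := A :\ a; set B' := B :\ b.
  have [f2 [inj2 P2]] : exists f : I -> J, {in A' &, injective f} /\
    forall i, i \in A' -> (f i \in B') && E i (f i).
    apply: IH.
      by move: hA; rewrite (cardsD1 a A) aA.
    move=> T sT; have [->|nT] := eqVneq T set0; first by rewrite cards0.
    have pT : T \proper A.
      rewrite properEneq; apply/andP; split.
        apply/eqP => eTA; move/subsetP: sT => /(_ a); rewrite eTA aA !inE eqxx.
        by move=> /(_ isT).
      by apply: subset_trans sT _; apply: subsetDl.
    have := hn T; rewrite pT nT /= -ltnNge => lt1.
    have s2 : nbh B T :\ b \subset nbh B' T.
      apply/subsetP => j; rewrite !inE => /andP[jb /andP[jB ->]].
      by rewrite jb jB.
    apply: leq_trans (subset_leq_card s2).
    move: lt1; rewrite (cardsD1 b (nbh B T)).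
    by case: (b \in nbh B T) => /=; rewrite ?add1n ?add0n //; apply: ltnW.
  exists (fun i => if i == a then b else f2 i); split.
    move=> x y xA yA /=.
    have A'i : forall i, i \in A -> i != a -> i \in A' by move=> i iA ia; rewrite !inE ia.
    have nb : forall i, i \in A -> i != a -> f2 i != b.
      by move=> i iA ia; case/andP: (P2 i (A'i i iA ia)); rewrite !inE => /andP[].
    case: (eqVneq x a) => xa; case: (eqVneq y a) => ya.
    - by rewrite xa ya.
    - by move=> e; have := nb y yA ya; rewrite -e eqxx.
    - by move=> e; have := nb x xA xa; rewrite e eqxx.
    - by apply: inj2; apply: A'i.
  move=> i iA /=; case: (eqVneq i a) => [->|ia]; first by rewrite bB Eab.
  have iA' : i \in A' by rewrite !inE ia.
  by case/andP: (P2 i iA'); rewrite !inE => /andP[_ ->] ->.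
Qed.
End HallSec.

Section Basics.
Variables (R : realFieldType) (d : nat).
Implicit Types (u w x : 'rV[R]_d).

Lemma dotvE u w : dotv u w = \sum_k u 0 k * w 0 k.
Proof. by rewrite /dotv !mxE; apply: eq_bigr => k _; rewrite mxE. Qed.

Lemma dotvC u w : dotv u w = dotv w u.
Proof. by rewrite !dotvE; apply: eq_bigr => k _; rewrite mulrC. Qed.

Lemma dotvDl u w x : dotv (u + w) x = dotv u x + dotv w x.
Proof. by rewrite !dotvE -big_split; apply: eq_bigr => k _; rewrite mxE mulrDl. Qed.

Lemma dotvNl u x : dotv (- u) x = - dotv u x.
Proof. by rewrite !dotvE -sumrN; apply: eq_bigr => k _; rewrite mxE mulNr. Qed.

Lemma dotvBl u w x : dotv (u - w) x = dotv u x - dotv w x.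
Proof. by rewrite dotvDl dotvNl. Qed.

Lemma dotvZl (a : R) u x : dotv (a *: u) x = a * dotv u x.
Proof. by rewrite !dotvE mulr_sumr; apply: eq_bigr => k _; rewrite mxE mulrA. Qed.

Lemma dotv0l x : dotv 0 x = 0.
Proof. by rewrite dotvE big1 // => k _; rewrite mxE mul0r. Qed.

Lemma dotv_suml (I : finType) (P : pred I) (a : I -> R) (f : I -> 'rV[R]_d) x :
  dotv (\sum_(i | P i) a i *: f i) x = \sum_(i | P i) a i * dotv (f i) x.
Proof.
elim/big_rec2: _ => [|i y1 y2 Pi <-]; first by rewrite dotv0l.
by rewrite dotvDl dotvZl.
Qed.

Lemma dotvBr u w x : dotv x (u - w) = dotv x u - dotv x w.
Proof. by rewrite dotvC dotvBl !(dotvC x). Qed.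

Lemma dotv_gt0 u : u != 0 -> 0 < dotv u u.
Proof.
move=> nu; rewrite dotvE lt_neqAle sumr_ge0 ?andbT; last by move=> k _; rewrite -expr2 sqr_ge0.
apply/eqP => /esym/eqP; rewrite psumr_eq0; last by move=> k _; rewrite -expr2 sqr_ge0.
move=> /allP h; move/eqP: nu; apply; apply/rowP => k.
have := h k (mem_index_enum k); rewrite -expr2 sqrf_eq0 => /eqP ->.
by rewrite mxE.
Qed.

Lemma dotv_sq_lt u w : u != w -> dotv w w <= dotv u u -> dotv u w < dotv u u.
Proof.
move=> nuw le; have : 0 < dotv (u - w) (u - w) by apply: dotv_gt0; rewrite subr_eq0.
rewrite dotvBl !dotvBr (dotvC w u) => h.
move: le h; set a := dotv u u; set b := dotv w w; set c := dotv u w; lra.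
Qed.

Lemma small_delta (T : finType) (P : pred T) (al be : T -> R) :
  (forall t, P t -> 0 < al t) -> exists2 del : R, 0 < del & forall t, P t -> del * be t < al t.
Proof.
move=> hal; set S := \sum_(t | P t) `|be t| / al t.
have S0 : 0 <= S by apply: sumr_ge0 => t Pt; rewrite divr_ge0 // ltW // hal.
exists (1 + S)^-1; first by rewrite invr_gt0 ltr_wpDr.
move=> t Pt; have at0 := hal t Pt.
have hS : `|be t| / al t <= S.
  rewrite /S (bigD1 t) //= lerDl; apply: sumr_ge0 => s /andP[Ps _].
  by rewrite divr_ge0 // ltW // hal.
apply: (@le_lt_trans _ _ ((1 + S)^-1 * `|be t|)).
  by rewrite ler_wpM2l ?invr_ge0 ?ler_wpDr // real_ler_norm // num_real.
rewrite mulrC ltr_pdivrMr ?ltr_wpDr //.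
rewrite -(@ltr_pM2r _ (al t)^-1) ?invr_gt0 // -mulrA mulrA [al t * _]mulrC mulfK ?gt_eqF //.
by apply: le_lt_trans hS _; rewrite ltrDr.
Qed.

Lemma exmax (T : finType) (P : pred T) (f : T -> R) t0 :
  P t0 -> exists t, P t /\ forall s, P s -> f s <= f t.
Proof.
move=> Pt0; case: (@Order.TotalTheory.arg_maxP _ R T t0 P f Pt0) => t Pt h.
by exists t.
Qed.
End Basics.

Section Geo.
Variables (R : realFieldType) (d n r : nat) (v : 'I_n -> 'rV[R]_d)
  (F : 'I_r -> {set 'I_n}) (m : nat) (X : 'I_m -> 'rV[R]_d).
Hypothesis H2 : forall i i', i != i' -> ~ (exists t : R, 0 < t /\ v i' = t *: v i).
Hypothesis H3 : forall j j', j != j' ->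
  ~ (forall x, cone_of v (F j) x <-> cone_of v (F j') x).
Hypothesis Hs : simplicial_fan v F.
Hypothesis P2 : forall j, exists k, is_vertex X k /\
  (forall c, cone_of v (F j) c <-> normal_cone X k c).
Hypothesis P3 : forall k, is_vertex X k -> exists j,
  (forall c, cone_of v (F j) c <-> normal_cone X k c).

Lemma sum_pick j i (a : R) : i \in F j ->
  \sum_(l in F j) ((l == i)%:R * a) *: v l = a *: v i.
Proof.
move=> iF; rewrite (bigD1 i) //= eqxx mul1r big1 ?addr0 // => l /andP[_ /negbTE ->].
by rewrite mul0r scale0r.
Qed.

Lemma sum_pick1 j i : i \in F j -> \sum_(l in F j) (l == i)%:R *: v l = v i.
Proof.
move=> iF; rewrite (bigD1 i) //= eqxx scale1r big1 ?addr0 // => l /andP[_ /negbTE ->].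
by rewrite scale0r.
Qed.

Lemma v_neq0 j i : i \in F j -> v i != 0.
Proof.
move=> iF; apply/eqP => h.
have := Hs (a := fun l => (l == i)%:R * 1) _ iF.
by rewrite sum_pick // scale1r h eqxx mulr1 => /(_ erefl) /eqP; rewrite oner_eq0.
Qed.

Lemma cone_gen j i : i \in F j -> cone_of v (F j) (v i).
Proof.
move=> iF; exists (fun l => (l == i)%:R * 1); split; first by move=> l; rewrite mulr1 ler0n.
by rewrite sum_pick // scale1r.
Qed.

Lemma vertex_exists (k0 : 'I_m) g : exists k, is_vertex X k /\ normal_cone X k g.
Proof.
have [a [_ ha]] := exmax (fun l => dotv g (X l)) (erefl : predT k0).
have [a2 [/eqP ea2 ha2]] := exmax (fun l => dotv (X l) (X l))
   (eqxx (dotv g (X a)) : [pred l | dotv g (X l) == dotv g (X a)] a).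
have hpos : forall l, [pred l | dotv g (X l) < dotv g (X a)] l ->
    0 < dotv g (X a) - dotv g (X l) by move=> l /=; rewrite subr_gt0.
have [del del0 hdel] := small_delta
  (fun l => dotv (X a2) (X l) - dotv (X a2) (X a2)) hpos.
exists a2; split; last by move=> l; rewrite ea2 ha.
exists (g + del *: X a2) => l nl; rewrite !dotvDl !dotvZl.
have := ha l isT; rewrite le_eqVlt => /orP[/eqP e|lt].
  have := dotv_sq_lt (u := X a2) (w := X l); rewrite eq_sym => /(_ nl).
  rewrite ha2 /=; last by rewrite e.
  by move=> /(_ isT) h; rewrite e -ea2 ltrD2l ltr_pM2l.
have := hdel l lt; rewrite ea2 in lt *; move: lt.
set A := dotv g (X l); set B := dotv g (X a2); set C := dotv (X a2) (X l).
set D := dotv (X a2) (X a2); move=> lt h; lra.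
Qed.


Lemma extreme j j' i : i \in F j -> cone_of v (F j') (v i) -> i \in F j'.
Proof.
move=> iF [b [b0 eb]].
have [k [_ ck]] := P2 j; have [k' [_ ck']] := P2 j'.
have viN : normal_cone X k (v i) by apply/ck; apply: cone_gen.
have viN' : normal_cone X k' (v i) by apply/ck'; exists b.
have eqi : dotv (v i) (X k) = dotv (v i) (X k') by apply/le_anti; rewrite viN viN'.
have vsN' : forall s, s \in F j' -> normal_cone X k' (v s).
  by move=> s sF; apply/ck'; apply: cone_gen.
have tz : forall s, s \in F j' -> b s * dotv (v s) (X k') - b s * dotv (v s) (X k) = 0.
  have : \sum_(s in F j') (b s * dotv (v s) (X k') - b s * dotv (v s) (X k)) == 0.
    by rewrite sumrB -!dotv_suml -eb eqi subrr.
  rewrite psumr_eq0; last first.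
    by move=> s sF; rewrite subr_ge0 ler_wpM2l // vsN'.
  by move=> /allP h s sF; apply/eqP; have := h s (mem_index_enum s); rewrite sF.
have inc : forall s, s \in F j' -> 0 < b s -> cone_of v (F j) (v s).
  move=> s sF bs; apply/ck => l.
  have : dotv (v s) (X k') = dotv (v s) (X k).
    by apply: (mulfI (lt0r_neq0 bs)); apply/eqP; rewrite -subr_eq0 tz.
  by move=> <-; apply: vsN'.
have [c hc] : exists c : 'I_n -> {ffun 'I_n -> R}, forall s,
    (s \in F j') && (0 < b s) -> (forall t, 0 <= c s t) /\ v s = \sum_(t in F j) c s t *: v t.
  apply: (@fin_all_exists _ (fun _ => {ffun 'I_n -> R}) (fun s (c : {ffun 'I_n -> R}) =>
    (s \in F j') && (0 < b s) -> (forall t, 0 <= c t) /\ v s = \sum_(t in F j) c t *: v t)) => s.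
  case: (boolP ((s \in F j') && (0 < b s))) => [/andP[sF bs]|_]; last by exists [ffun=> 0].
  have [a [a0 ea]] := inc s sF bs; exists [ffun t => a t]; move=> _.
  by split => [t|]; rewrite ?ffunE //; rewrite ea; apply: eq_bigr => t _; rewrite ffunE.
have bv : forall s, s \in F j' -> b s *: v s = b s *: \sum_(t in F j) c s t *: v t.
  move=> s sF; have := b0 s; rewrite le_eqVlt => /orP[/eqP <-|bs]; first by rewrite !scale0r.
  by have [_ <-] := hc s (introT andP (conj sF bs)).
pose e t := \sum_(s in F j') b s * c s t.
have ev : v i = \sum_(t in F j) e t *: v t.
  rewrite eb (eq_bigr _ bv).
  under eq_bigr do rewrite scaler_sumr.
  rewrite exchange_big /=; apply: eq_bigr => t _; rewrite /e scaler_suml.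
  by apply: eq_bigr => s _; rewrite scalerA.
have ee : forall t, t \in F j -> e t = (t == i)%:R.
  move=> t tF; apply/eqP; rewrite -subr_eq0; apply/eqP.
  apply: (Hs (a := fun t => e t - (t == i)%:R)) tF.
  under eq_bigr do rewrite scalerBl.
  rewrite sumrB -ev.
  by rewrite sum_pick1 // subrr.
have [s0 [s0F bs0]] : exists s0, s0 \in F j' /\ 0 < b s0.
  case: (boolP [exists s0, (s0 \in F j') && (0 < b s0)]) => [/existsP[s0 /andP[? ?]]|/existsPn hn].
    by exists s0.
  have := v_neq0 iF; rewrite eb big1 ?eqxx // => s sF.
  have := hn s; rewrite sF /= => hb.
  have -> : b s = 0 by apply/eqP; rewrite eq_le b0 andbT leNgt.
  by rewrite scale0r.
case: (eqVneq s0 i) => [<-//|ns]; exfalso.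
have [c0 cv] := hc s0 (introT andP (conj s0F bs0)).
have cz : forall t, t \in F j -> t != i -> c s0 t = 0.
  move=> t tF ti; have := ee t tF; rewrite (negbTE ti) /e => /eqP.
  rewrite psumr_eq0; last first.
    move=> s sF; have := b0 s; rewrite le_eqVlt => /orP[/eqP <-|bs]; first by rewrite mul0r.
    by have [cs _] := hc s (introT andP (conj sF bs)); rewrite mulr_ge0 // ltW.
  move=> /allP /(_ s0 (mem_index_enum s0)); rewrite s0F /= mulf_eq0 (gt_eqF bs0) /=.
  by move/eqP.
have vs : v s0 = c s0 i *: v i.
  by rewrite cv (bigD1 i) //= big1 ?addr0 // => t /andP[tF ti]; rewrite cz // scale0r.
have : c s0 i != 0.
  by apply: contraTneq (v_neq0 s0F) => h; rewrite vs h scale0r eqxx.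
move=> cnz; apply: (H2 (i := i) (i' := s0)); first by rewrite eq_sym.
by exists (c s0 i); split => //; rewrite lt_neqAle eq_sym cnz c0.
Qed.

Lemma vertex_nc k c : (forall l, X l != X k -> dotv c (X l) < dotv c (X k)) ->
  normal_cone X k c.
Proof.
move=> hc l; case: (eqVneq (X l) (X k)) => [->//|nl].
by apply: ltW; apply: hc.
Qed.

Lemma subF j j' : F j \subset F j' -> j = j'.
Proof.
move=> sjj.
have [k [[c hc] ck]] := P2 j; have [k' [_ ck']] := P2 j'.
have [a [a0 ea]] : cone_of v (F j) c by apply/ck; apply: vertex_nc.
have cj' : cone_of v (F j') c.
  exists (fun l => if l \in F j then a l else 0); split.
    by move=> l; case: (l \in F j).
  rewrite ea [RHS](eq_bigr (fun l => if l \in F j then a l *: v l else 0)); last first.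
    by move=> l _; case: (l \in F j); rewrite ?scale0r.
  rewrite -big_mkcondr /=; apply: eq_bigl => l.
  by case: (boolP (l \in F j)) => h; rewrite ?andbT ?andbF // (subsetP sjj).
have := (proj1 (ck' c) cj') k.
case: (eqVneq (X k) (X k')) => [ekk _|nk]; last first.
  by move=> h; have := hc k'; rewrite eq_sym nk ltNge h => /(_ isT).
case: (eqVneq j j') => // njj; exfalso; apply: (H3 njj) => x.
by rewrite ck ck' /normal_cone ekk.
Qed.

Lemma neighbor j l : l \in F j -> exists j', j' != j /\ F j :\ l \subset F j'.
Proof.
move=> lF; have [k [[c hc] ck]] := P2 j.
pose a t : R := (t != l)%:R.
have a0 : forall t, 0 <= a t by move=> t; rewrite ler0n.
pose p := \sum_(t in F j) a t *: v t.
have pN : normal_cone X k p by apply/ck; exists a.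
have [b [pb nb]] : exists b, dotv p (X b) = dotv p (X k) /\ X b != X k.
  case: (boolP [exists b, (dotv p (X b) == dotv p (X k)) && (X b != X k)]).
    by move=> /existsP[b /andP[/eqP ? ?]]; exists b.
  move=> /existsPn hn; exfalso.
  have strict : forall b, X b != X k -> dotv p (X b) < dotv p (X k).
    move=> b nb; rewrite lt_neqAle pN andbT; apply: contraNneq (hn b) => ->.
    by rewrite eqxx nb.
  have hpos : forall b, [pred b | X b != X k] b -> 0 < dotv p (X k) - dotv p (X b).
    by move=> b /= nb; rewrite subr_gt0 strict.
  have [del del0 hdel] := small_delta (fun b => dotv (v l) (X k) - dotv (v l) (X b)) hpos.
  pose q := p - del *: v l.
  have qN : normal_cone X k q.
    move=> b; case: (eqVneq (X b) (X k)) => [->//|nb].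
    have := hdel b nb; rewrite /q !dotvBl !dotvZl.
    set A := dotv p (X b); set B := dotv p (X k); set C := dotv (v l) (X b).
    set D := dotv (v l) (X k); move=> h; lra.
  have [a' [a0' ea']] : cone_of v (F j) q by apply/ck.
  have hz : \sum_(t in F j) (a' t - a t + (t == l)%:R * del) *: v t = 0.
    under eq_bigr do rewrite !scalerDl scaleNr.
    rewrite !big_split /= sumrN sum_pick // -ea' /q -/p.
    by rewrite -[p - _ - p]addrA [- _ - p]addrC addrA subrr add0r addNr.
  have := Hs hz lF; rewrite /a eqxx /= subr0 mul1r => /eqP; rewrite addr_eq0 => /eqP h.
  by have := a0' l; rewrite h oppr_ge0 leNgt del0.
pose h := X b - X k.
have hpos : forall l', [pred l' | dotv p (X l') < dotv p (X k)] l' ->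
  0 < dotv p (X k) - dotv p (X l') by move=> l' /=; rewrite subr_gt0.
have [del del0 hdel] := small_delta (fun l' => dotv h (X l') - dotv h (X b)) hpos.
pose g2 := p + del *: h.
have [k' [vk' gN]] := vertex_exists k g2.
have gle : dotv p (X b) + del * dotv h (X b) <= dotv p (X k') + del * dotv h (X k').
  by have := gN b; rewrite /g2 (dotvDl p) (dotvDl p) !dotvZl.
have pk' : dotv p (X k') = dotv p (X k).
  apply/eqP; rewrite eq_le pN /=; rewrite leNgt; apply/negP => lt.
  have := hdel k' lt; move: gle; rewrite pb.
  set A := dotv p (X k); set B := dotv p (X k'); set C := dotv h (X k).
  set D := dotv h (X k'); set E := dotv h (X b); move=> h1 h2; lra.
have nk' : X k' != X k.
  apply/eqP => e; move: gle; rewrite e pb lerD2l (ler_pM2l del0) => hle.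
  have : 0 < dotv h h by apply: dotv_gt0; rewrite subr_eq0.
  by rewrite /h dotvBr -/h ltNge subr_le0 hle.
have pN' : normal_cone X k' p by move=> l0; rewrite pk' pN.
have [j' cj'] := P3 vk'.
exists j'; split.
  apply/eqP => ejj; move: cj'; rewrite ejj => cj.
  have : normal_cone X k' c by apply/cj/ck; apply: vertex_nc.
  by move=> /(_ k); rewrite leNgt hc.
apply/subsetP => t; rewrite !inE => /andP[tl tF].
apply: (extreme tF); apply/cj' => l0.
have vN : forall s, s \in F j -> normal_cone X k (v s) by move=> s sF; apply/ck; apply: cone_gen.
have : \sum_(s in F j) (a s * dotv (v s) (X k) - a s * dotv (v s) (X k')) == 0.
  by rewrite sumrB -!dotv_suml -/p pk' subrr.
rewrite psumr_eq0; last by move=> s sF; rewrite subr_ge0 ler_wpM2l // vN.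
move=> /allP /(_ t (mem_index_enum t)); rewrite tF /a tl /= !mul1r subr_eq0 => /eqP <-.
by apply: vN.
Qed.

End Geo.

Section Main.
Variables (R : realFieldType) (d n r : nat) (v : 'I_n -> 'rV[R]_d)
  (F : 'I_r -> {set 'I_n}) (m : nat) (X : 'I_m -> 'rV[R]_d).
Hypothesis H1 : forall i, exists j, i \in F j.
Hypothesis nbP : forall j l, l \in F j -> exists j', j' != j /\ F j :\ l \subset F j'.
Hypothesis subF : forall j j', F j \subset F j' -> j = j'.

Definition nbf j l := odflt j [pick j' | (j' != j) && (F j :\ l \subset F j')].

Lemma nbfP j l : l \in F j -> nbf j l != j /\ F j :\ l \subset F (nbf j l).
Proof.
move=> lF; rewrite /nbf; case: pickP => [j' /andP[] //|h] /=.
have [j' [h1 h2]] := nbP lF; by have := h j'; rewrite h1 h2.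
Qed.

Lemma deg_ge j i : i \in F j -> (#|F j| <= #|[set j' | i \in F j']|)%N.
Proof.
move=> iF; pose f l := if l == i then j else nbf j l.
have inj : {in F j &, injective f}.
  move=> l1 l2 l1F l2F; rewrite /f.
  case: (eqVneq l1 i) => [->|l1i]; case: (eqVneq l2 i) => [->|l2i] //.
  - by move=> e; have [h _] := nbfP l2F; rewrite -e eqxx in h.
  - by move=> e; have [h _] := nbfP l1F; rewrite e eqxx in h.
  move=> e; apply/eqP; apply/negP => /negP n12.
  have [h1 s1] := nbfP l1F; have [_ s2] := nbfP l2F.
  have : F j \subset F (nbf j l1).
    apply/subsetP => t tF; case: (eqVneq t l1) => [->|tl1].
      by rewrite e; apply: (subsetP s2); rewrite !inE n12 l1F.
    by apply: (subsetP s1); rewrite !inE tl1 tF.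
  by move=> /subF e'; rewrite -e' eqxx in h1.
rewrite -(card_in_imset inj); apply: subset_leq_card; apply/subsetP => _ /imsetP[l lF ->].
rewrite inE /f; case: (eqVneq l i) => [_|li]; first by [].
have [_ s] := nbfP lF; by apply: (subsetP s); rewrite !inE eq_sym li iF.
Qed.

Lemma hall_cond (S : {set 'I_n}) :
  (#|S| <= #|nbh (fun i j => i \in F j) [set: 'I_r] S|)%N.
Proof.
set N := nbh _ _ _.
pose w j : R := (#|F j|%:R)^-1.
have step1 : forall i, (1 : R) <= \sum_(j in [set j' | i \in F j']) w j.
  move=> i; have [j0 j0F] := H1 i.
  have [js [jsF hjs]] := exmax (fun j => (#|F j|%:R : R)) (j0F : [pred j | i \in F j] j0).
  have cpos : (0 : R) < #|F js|%:R by rewrite ltr0n card_gt0; apply/set0Pn; exists i.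
  apply: (@le_trans _ _ (\sum_(j in [set j' | i \in F j']) w js)); last first.
    apply: ler_sum => j; rewrite inE => jF; rewrite /w lef_pV2 ?hjs //.
      by rewrite posrE ltr0n card_gt0; apply/set0Pn; exists i.
  have -> : \sum_(j in [set j' | i \in F j']) w js = w js *+ #|[set j' | i \in F j']| by rewrite sumr_const.
  rewrite -mulr_natl /w ler_pdivlMr // mul1r ler_nat.
  exact: deg_ge.
have step2 : (#|S|%:R : R) <= \sum_(i in S) \sum_(j in [set j' | i \in F j']) w j.
  have e1 : \sum_(i in S) (1 : R) = #|S|%:R by rewrite sumr_const.
  by rewrite -e1; apply: ler_sum => i _; apply: step1.
rewrite -(ler_nat R); apply: le_trans step2 _.
rewrite (exchange_big_dep (mem N)) /=; last first.
  move=> i j iS; rewrite !inE => ijF; apply/existsP; exists i; by rewrite iS.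
have e2 : \sum_(j in N) (1 : R) = #|N|%:R by rewrite sumr_const.
rewrite -e2; apply: ler_sum => j jN.
have jpos : (0 < #|F j|)%N.
  move: jN; rewrite /N inE => /andP[_ /existsP[i /andP[_ iF]]].
  by rewrite card_gt0; apply/set0Pn; exists i.
have w0 : 0 <= w j by rewrite /w invr_ge0 ler0n.
apply: (@le_trans _ _ (\sum_(i in F j) w j)).
  rewrite [X in _ <= X]big_mkcond [X in X <= _]big_mkcond /=; apply: ler_sum => i _.
  case: (boolP ((i \in S) && _)) => [/andP[_]|_]; first by rewrite inE => ->.
  by case: (i \in F j).
have -> : \sum_(i in F j) w j = w j *+ #|F j| by rewrite sumr_const.
by rewrite -mulr_natl /w mulfV // pnatr_eq0 -lt0n.
Qed.
End Main.

Theorem lemma3p10 (R : realFieldType) (d n r : nat)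
  (v : 'I_n -> 'rV[R]_d) (F : 'I_r -> {set 'I_n}) :
  fan_data v F -> simplicial_fan v F -> polytopal_fan v F ->
  exists M : {set 'I_n * 'I_r}, is_matching F M /\ #|M| = n.
Proof.
move=> [H1 H2 H3] Hs [m [X [_ P2 P3]]].
have nbP := neighbor H2 Hs P2 P3.
have sF := subF H3 P2.
case: (posnP n) => [n0|npos].
  exists set0; split; last by rewrite cards0 n0.
  by split => [e|e e']; rewrite inE.
have [j0 _] := H1 (Ordinal npos).
have [f [finj fP]] := @hall_gen _ _ (fun i j => i \in F j) j0 #|[set: 'I_n]|
  [set: 'I_n] [set: 'I_r] (leqnn _) (fun S _ => hall_cond R H1 nbP sF S).
exists [set (i, f i) | i : 'I_n]; split.
  split.
    move=> e /imsetP[i _ ->]; rewrite /incidence_edge /=.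
    by case/andP: (fP i (in_setT i)).
  move=> e e' /imsetP[i _ ->] /imsetP[i' _ ->] ne /=; split.
    by apply: contraNneq ne => ->.
  by apply: contraNneq ne => /finj ee; rewrite ee ?inE.
by rewrite card_imset ?card_ord // => i i' [].
Qed.
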